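(* Let $\Omega\subset\mathbb{R}$ be an open nonempty set such that $$\Omega = \bigoplus_{k=1}^m\Omega := \{y_1+\dots+y_m : y_k\in\Omega,\ 1\leq k\leq m\}$$ for some integer $m\geq 2$. Then $\Omega\in\{(0,+\infty),\ (-\infty,0),\ \mathbb{R}\}$. *)

(* Defs.v *)
From Stdlib Require Import Reals.
Open Scope R_scope.

(* The m-fold Minkowski sum  Omega (+) ... (+) Omega  (m summands):
   the set of all y_1 + ... + y_m with each y_k in Omega.
   Indices are shifted to 0..m-1; sum_f_R0 y (m-1) = y 0 + ... + y (m-1). *)
Definition msum (m : nat) (Omega : R -> Prop) : R -> Prop :=
  fun x => exists y : nat -> R,
    (forall k, (k < m)%nat -> Omega (y k)) /\ x = sum_f_R0 y (m - 1).

(* Main.v *)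
Require Import Defs.
From Stdlib Require Import Reals.
From Stdlib Require Import Lra Lia Psatz ZArith.
Open Scope R_scope.

Lemma nat_gt (X : R) : exists n : nat, X < INR n.
Proof.
  destruct (archimed X) as [H1 H2].
  exists (Z.to_nat (up X)).
  destruct (Z_le_gt_dec 0 (up X)) as [Hz|Hz].
  - rewrite INR_IZR_INZ, Z2Nat.id; [lra|lia].
  - assert (IZR (up X) < IZR 0) by (apply IZR_lt; lia).
    pose proof (pos_INR (Z.to_nat (up X))). simpl in *. lra.
Qed.

Lemma floor_ex (d X : R) : 0 < d -> 0 <= X ->
  exists k : nat, INR k * d <= X /\ X < INR (S k) * d.
Proof.
  intros Hd HX.
  destruct (nat_gt (X / d)) as [n Hn].
  assert (Hu : X / d * d = X) by (field; lra).
  assert (HXn : X < INR n * d) by nra.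
  clear Hn Hu.
  induction n as [|n IH].
  - simpl in HXn. lra.
  - destruct (Rlt_or_le X (INR n * d)) as [Hl|Hl].
    + apply IH; exact Hl.
    + exists n; split; [exact Hl|exact HXn].
Qed.

Lemma sum_shift (y a : R) n :
  sum_f_R0 (fun k => match k with O => y | S _ => a end) n = y + INR n * a.
Proof.
  induction n as [|n IH].
  - simpl. lra.
  - cbn [sum_f_R0]. rewrite IH, S_INR. lra.
Qed.

Lemma sum_opp (y : nat -> R) n :
  sum_f_R0 (fun k => - y k) n = - sum_f_R0 y n.
Proof.
  induction n as [|n IH]; cbn [sum_f_R0]; [lra| rewrite IH; lra].
Qed.

Lemma sum_ge2 (Y : nat -> R) n : (1 <= n)%nat ->
  (forall k, (k <= n)%nat -> 0 <= Y k) -> Y 0%nat + Y 1%nat <= sum_f_R0 Y n.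
Proof.
  induction n as [|n IH]; intros Hn HY.
  - lia.
  - destruct n as [|n].
    + simpl. lra.
    + cbn [sum_f_R0] in *.
      assert (H1 : Y 0%nat + Y 1%nat <= sum_f_R0 Y (S n)).
      { apply IH; [lia|]. intros k Hk; apply HY; lia. }
      cbn [sum_f_R0] in H1.
      pose proof (HY (S (S n)) (le_n _)). lra.
Qed.

Section S.
Variable Omega : R -> Prop.
Variable m : nat.
Hypothesis Hm : (2 <= m)%nat.
Hypothesis Hsum : forall x, Omega x <-> msum m Omega x.

Lemma shift y a : Omega y -> Omega a -> Omega (y + INR (m-1) * a).
Proof.
  intros Hy Ha. apply Hsum.
  exists (fun k => match k with O => y | S _ => a end); split.
  - intros [|k] _; assumption.
  - rewrite sum_shift; reflexivity.
Qed.

Lemma iter y a : Omega y -> Omega a -> forall k : nat,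
  Omega (y + INR k * (INR (m-1) * a)).
Proof.
  intros Hy Ha k. induction k as [|k IH].
  - simpl. replace (y + 0 * (INR (m - 1) * a)) with y by ring. exact Hy.
  - rewrite S_INR.
    replace (y + (INR k + 1) * (INR (m - 1) * a))
      with ((y + INR k * (INR (m - 1) * a)) + INR (m-1) * a) by ring.
    apply shift; assumption.
Qed.

Lemma Mpos : 0 < INR (m-1).
Proof. apply lt_0_INR; lia. Qed.

Hypothesis Hpos : forall x, Omega x -> 0 < x.

Lemma halve x : Omega x -> exists y, Omega y /\ 2 * y <= x.
Proof.
  intros Hx. apply Hsum in Hx. destruct Hx as [Y [HY ->]].
  assert (H0 : 0 < Y 0%nat) by (apply Hpos, HY; lia).
  assert (H1 : 0 < Y 1%nat) by (apply Hpos, HY; lia).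
  assert (Hs : Y 0%nat + Y 1%nat <= sum_f_R0 Y (m-1)).
  { apply sum_ge2; [lia|]. intros k Hk. left. apply Hpos, HY; lia. }
  destruct (Rle_or_lt (Y 0%nat) (Y 1%nat)).
  - exists (Y 0%nat); split; [apply HY; lia|lra].
  - exists (Y 1%nat); split; [apply HY; lia|lra].
Qed.

Lemma smalln x0 : Omega x0 -> forall n : nat,
  exists y, Omega y /\ y * (INR n + 1) <= x0.
Proof.
  intros Hx0 n. induction n as [|n IH].
  - exists x0; split; [exact Hx0|simpl; lra].
  - destruct IH as [y [Hy Hyl]].
    destruct (halve y Hy) as [y' [Hy' Hy'l]].
    exists y'; split; [exact Hy'|].
    pose proof (Hpos y Hy). pose proof (Hpos y' Hy'). pose proof (pos_INR n).
    rewrite S_INR. nra.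
Qed.

Lemma small x0 : Omega x0 -> forall eps, 0 < eps -> exists y, Omega y /\ y < eps.
Proof.
  intros Hx0 eps He.
  destruct (nat_gt (x0 / eps)) as [n Hn].
  destruct (smalln x0 Hx0 n) as [y [Hy Hyl]].
  exists y; split; [exact Hy|].
  assert (Hu : x0 / eps * eps = x0) by (field; lra).
  pose proof (pos_INR n). pose proof (Hpos y Hy).
  nra.
Qed.

Lemma pos_case : open_set Omega -> (exists x, Omega x) ->
  forall x, Omega x <-> 0 < x.
Proof.
  intros Hop [x0 Hx0] z; split; [apply Hpos|intros Hz].
  destruct (small x0 Hx0 z Hz) as [c [Hc Hcz]].
  destruct (Hop c Hc) as [[rho Hrho] Hdisc]. simpl in Hdisc.
  unfold included, disc in Hdisc. simpl in Hdisc.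
  pose proof Mpos as HM.
  destruct (small x0 Hx0 (rho / INR (m-1))) as [p [Hp Hpl]].
  { apply Rdiv_lt_0_compat; assumption. }
  assert (Hpp := Hpos p Hp).
  assert (Hd : INR (m-1) * p < rho).
  { assert (rho / INR (m-1) * INR (m-1) = rho) by (field; lra). nra. }
  destruct (floor_ex (INR (m-1) * p) (z - c)) as [k [Hk1 Hk2]].
  { nra. } { lra. }
  rewrite S_INR in Hk2.
  set (u := z - INR k * (INR (m-1) * p)).
  assert (Hu : Omega u).
  { apply Hdisc. unfold u. apply Rabs_def1; nra. }
  replace z with (u + INR k * (INR (m-1) * p)) by (unfold u; ring).
  apply iter; assumption.
Qed.

End S.

Lemma mixed_case (Omega : R -> Prop) (m : nat) :
  (2 <= m)%nat -> (forall x, Omega x <-> msum m Omega x) -> open_set Omega ->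
  forall p q, Omega p -> 0 < p -> Omega q -> q <= 0 -> forall z, Omega z.
Proof.
  intros Hm Hsum Hop p q Hp Hp0 Hq Hq0 z.
  destruct (Hop q Hq) as [[del Hdel] Hdisc].
  unfold included, disc in Hdisc. simpl in Hdisc.
  pose proof (Mpos m Hm) as HM.
  set (M := INR (m-1)) in *.
  set (c := q - del / 2). set (rho := del / 4).
  set (e := - (c + rho)).
  assert (He : 0 < e) by (unfold e, c, rho; lra).
  assert (Hrho : 0 < rho) by (unfold rho; lra).
  set (t := (z - p) / M).
  destruct (nat_gt (p / (2 * rho) + Rabs t / e)) as [j Hj].
  assert (Ha : 0 <= p / (2*rho)) by (apply Rlt_le, Rdiv_lt_0_compat; lra).
  assert (Hb : 0 <= Rabs t / e) by (apply Rmult_le_pos; [apply Rabs_pos| left; apply Rinv_0_lt_compat; lra]).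
  assert (Hj1 : p < INR j * (2 * rho)).
  { assert (p / (2*rho) * (2*rho) = p) by (field; lra). nra. }
  assert (Hj2 : Rabs t < INR j * e).
  { assert (Rabs t / e * e = Rabs t) by (field; lra). nra. }
  assert (Hjpos : 0 < INR j) by nra.
  assert (Ht : - t <= Rabs t) by (rewrite <- Rabs_Ropp; apply RRle_abs).
  destruct (floor_ex p (t + INR j * e)) as [k' [Hk1 Hk2]]; [lra|lra|].
  rewrite S_INR in Hk2.
  set (w := (t - (INR k' + 1) * p) / INR j).
  assert (Hw : Omega w).
  { apply Hdisc. apply Rabs_def1.
    - assert (w * INR j = t - (INR k' + 1) * p) by (unfold w; field; lra).
      unfold e, c, rho in *. nra.
    - assert (w * INR j = t - (INR k' + 1) * p) by (unfold w; field; lra).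
      unfold e, c, rho in *. nra. }
  pose proof (iter Omega m Hsum p p Hp Hp (S k')) as H1.
  pose proof (iter Omega m Hsum _ w H1 Hw j) as H2.
  rewrite S_INR in H2. fold M in H2.
  replace z with (p + (INR k' + 1) * (M * p) + INR j * (M * w)); [exact H2|].
  unfold w, t. field. lra.
Qed.

Theorem lemma5p1 (Omega : R -> Prop) (m : nat) :
  open_set Omega ->
  (exists x, Omega x) ->
  (2 <= m)%nat ->
  (forall x, Omega x <-> msum m Omega x) ->
  (forall x, Omega x <-> 0 < x) \/
  (forall x, Omega x <-> x < 0) \/
  (forall x, Omega x).
Proof.
  intros Hop Hne Hm Hsum.
  destruct (Classical_Prop.classic (exists p, Omega p /\ 0 < p)) as [[p [Hp Hp0]]|Hnp].
  - destruct (Classical_Prop.classic (exists q, Omega q /\ q <= 0)) as [[q [Hq Hq0]]|Hnq].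
    + right; right. exact (mixed_case Omega m Hm Hsum Hop p q Hp Hp0 Hq Hq0).
    + left. apply (pos_case Omega m Hm Hsum); [|exact Hop|exact Hne].
      intros x Hx. destruct (Rlt_or_le 0 x) as [H|H]; [exact H|].
      exfalso; apply Hnq; exists x; auto.
  - right; left.
    assert (Hneg : forall x, Omega x -> x < 0).
    { intros x Hx. destruct (Rlt_or_le x 0) as [H|H]; [exact H|].
      exfalso. destruct H as [H|H].
      - apply Hnp; exists x; auto.
      - subst x. destruct (Hop 0 Hx) as [[d Hd] Hdisc].
        apply Hnp. exists (d/2). split; [|simpl in *; lra].
        apply Hdisc. unfold disc; simpl. rewrite Rminus_0_r, Rabs_right; lra. }
    set (O' := fun x => Omega (- x)).
    assert (Hsum' : forall x, O' x <-> msum m O' x).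
    { intros x. unfold O'. rewrite Hsum. split.
      - intros [y [Hy Hyx]]. exists (fun k => - y k). split.
        + intros k Hk. unfold O'. rewrite Ropp_involutive. auto.
        + rewrite sum_opp, <- Hyx. ring.
      - intros [y [Hy Hyx]]. exists (fun k => - y k). split.
        + intros k Hk. apply Hy; exact Hk.
        + rewrite sum_opp, Hyx. reflexivity. }
    assert (Hop' : open_set O').
    { intros x Hx. destruct (Hop _ Hx) as [d Hd]. exists d.
      intros y Hy. apply Hd. unfold disc in *.
      replace (- y - - x) with (- (y - x)) by ring. rewrite Rabs_Ropp. exact Hy. }
    assert (Hne' : exists x, O' x).
    { destruct Hne as [x Hx]. exists (- x). unfold O'. rewrite Ropp_involutive. exact Hx. }
    assert (Hpos' : forall x, O' x -> 0 < x).
    { intros x Hx. apply Hneg in Hx. lra. }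
    pose proof (pos_case O' m Hm Hsum' Hpos' Hop' Hne') as HP.
    intros x. specialize (HP (- x)). unfold O' in HP. rewrite Ropp_involutive in HP.
    rewrite HP. lra.
Qed.
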